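(* Let $m$ be an integer and $n>0$ an integer. (1) The ordered root quadruples $\mathbf v=(w,x,y,z)$, $w\le x\le y\le z$, with $L(\mathbf v)>0$, $Q_{\mathcal D}(\mathbf v)=4m$ and smallest element $w=-n$ are in one-to-one correspondence with the integral binary quadratic forms $[A,B,C]=AX^2+2BXY+CY^2$ (primitive or imprimitive) of discriminant $\Delta=4B^2-4AC=-4n^2+4m$ satisfying $0\le 2B\le A\le C$; the correspondence is given by $$[A,B,C]=\left[-n+x,\ \tfrac12(-n+x+y-z),\ -n+y\right].$$ (2) If $\Delta=-4n^2+4m<0$, then $N_{\mathrm{root}}(4m;-n)=\widetilde{h^{\pm}}(-4(n^2-m))$.
   Context: $Q_{\mathcal D}(a,b,c,d)=2(a^2+b^2+c^2+d^2)-(a+b+c+d)^2$; $L(\mathbf v)=a+b+c+d$; $|\mathbf v|=|a|+|b|+|c|+|d|$. $\mathbf S_i$ ($i=1,\dots,4$) is the integer matrix replacing the $i$-th coordinate $a_i$ of a quadruple by $2\sum_{j\ne i}a_j-a_i$, other coordinates fixed. An integer quadruple is reduced if no $\mathbf S_i$ strictly decreases $|\cdot|$; a reduced quadruple ordered as $a\le b\le c\le d$ with $L\ge0$ is a root quadruple if $a+b+c\ge d>0$. $N_{\mathrm{root}}(k;-n)$ is the number of integer root quadruples $(w,x,y,z)$ with $Q_{\mathcal D}=k$, $w+x+y+z>0$ and smallest element $w=-n$. For a discriminant $\Delta<0$, $\widetilde{h^{\pm}}(\Delta)$ is the number of integral binary quadratic forms $[A,B,C]=AT^2+2BTU+CU^2$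 (primitive or imprimitive) with $4B^2-4AC=\Delta$ and $0\le2B\le A\le C$ (the $GL(2,\mathbb Z)$-reduced forms; equivalently the number of $GL(2,\mathbb Z)$-equivalence classes of positive definite forms of discriminant $\Delta$). *)

(* Defs.v *)
From mathcomp Require Import all_boot all_order all_algebra.
Set Implicit Arguments. Unset Strict Implicit. Unset Printing Implicit Defensive.
Import Order.TTheory GRing.Theory Num.Theory.
Local Open Scope ring_scope.

Definition quad := (int * int * int * int)%type.

Definition QD (v : quad) : int :=
  let: (a, b, c, d) := v in
  2 * (a ^+ 2 + b ^+ 2 + c ^+ 2 + d ^+ 2) - (a + b + c + d) ^+ 2.

Definition Lq (v : quad) : int := let: (a, b, c, d) := v in a + b + c + d.

Definition absq (v : quad) : int :=
  let: (a, b, c, d) := v in `|a| + `|b| + `|c| + `|d|.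

(* S_i (i = 1..4, here indexed by i : 'I_4 = 0..3): replace the i-th
   coordinate a_i by 2 * (sum of the other coordinates) - a_i. *)
Definition Sop (i : 'I_4) (v : quad) : quad :=
  let: (a, b, c, d) := v in
  match val i with
  | 0%N => (2 * (b + c + d) - a, b, c, d)
  | 1%N => (a, 2 * (a + c + d) - b, c, d)
  | 2%N => (a, b, 2 * (a + b + d) - c, d)
  | _ => (a, b, c, 2 * (a + b + c) - d)
  end.

Definition reduced (v : quad) : Prop :=
  forall i : 'I_4, ~ (absq (Sop i v) < absq v).

Definition root_quad (v : quad) : Prop :=
  let: (a, b, c, d) := v in
  [/\ reduced v, a <= b <= c, c <= d, 0 <= Lq v & d <= a + b + c /\ 0 < d].

Definition root_set (k n : int) (v : quad) : Prop :=
  let: (w, x, y, z) := v in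
  [/\ root_quad v, 0 < Lq v, QD v = k & w = - n].

(* Binary forms [A,B,C] = A T^2 + 2 B T U + C U^2. *)
Definition bform := (int * int * int)%type.

Definition disc (f : bform) : int :=
  let: (A, B, C) := f in 4 * B ^+ 2 - 4 * A * C.

(* GL(2,Z)-reduced forms of discriminant D: 0 <= 2B <= A <= C. *)
Definition reduced_form_set (D : int) (f : bform) : Prop :=
  let: (A, B, C) := f in [/\ disc f = D, 0 <= 2 * B, 2 * B <= A & A <= C].

Definition corr (n : int) (v : quad) (f : bform) : Prop :=
  let: (w, x, y, z) := v in
  let: (A, B, C) := f in
  [/\ A = - n + x, 2 * B = - n + x + y - z & C = - n + y].

Definition has_card (T : eqType) (P : T -> Prop) (N : nat) : Prop :=
  exists s : seq T, [/\ uniq s, forall x, x \in s <-> P x & size s = N].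

Definition Nroot_is (k n : int) (N : nat) : Prop := has_card (root_set k n) N.

Definition htilde_is (D : int) (N : nat) : Prop := has_card (reduced_form_set D) N.

(* Main.v *)
Set Warnings "-all".
Require Import Defs.
From mathcomp Require Import all_boot all_order all_algebra zify ring.
Import Order.TTheory GRing.Theory Num.Theory.
Local Open Scope ring_scope.

Definition quadof (n : int) (f : bform) : quad :=
  let: (A, B, C) := f in (- n, A + n, C + n, A + C + n - 2 * B).

Lemma QD_id (w x y z : int) :
  QD (w, x, y, z) = (w + x + y - z) ^+ 2 - 4 * (x + w) * (y + w) + 4 * w ^+ 2.
Proof. rewrite /QD; ring. Qed.

Lemma even_of (s K : int) : s ^+ 2 = 4 * K -> exists B, s = 2 * B.
Proof.
move=> h; exists (s %/ 2)%Z.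
have e := divz_eq s 2.
have h0 : (0 <= s %% 2)%Z by rewrite modz_ge0.
have h1 : (s %% 2 < 2)%Z by rewrite ltz_pmod.
move: e h0 h1 h; set q := (s %/ 2)%Z; set r := (s %% 2)%Z => e h0 h1 h.
nia.
Qed.

Lemma quadof_root (m n : int) (f : bform) : 0 < n ->
  reduced_form_set (- 4 * n ^+ 2 + 4 * m) f -> root_set (4 * m) n (quadof n f).
Proof.
case: f => [[A B] C] hn [hD h1 h2 h3] /=.
move: hD; rewrite /disc => hD.
split => //; last first.
- lia.
- lia.
split; try lia.
move=> i; case: i => [[|[|[|[|i]]]] Hi] //=; rewrite /absq; lia.
Qed.

Lemma root_form (m n : int) (v : quad) : root_set (4 * m) n v ->
  let: (w, x, y, z) := v in
  exists B, reduced_form_set (- 4 * n ^+ 2 + 4 * m) (x - n, B, y - n) /\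
            corr n v (x - n, B, y - n).
Proof.
case: v => [[[w x] y] z] [[_ /andP[h1 h2] h3 h4 [h5 h6]] hL hQ hw].
move: hQ; rewrite QD_id => hQ.
have [B hB] : exists B, w + x + y - z = 2 * B.
  apply: (@even_of _ (m - w ^+ 2 + (x + w) * (y + w))).
  rewrite mulrDr mulrBr -hQ; ring.
exists B; split; last by rewrite /corr; split; lia.
rewrite /reduced_form_set /disc; split; try lia.
Qed.

Definition rfb (D : int) (f : bform) : bool :=
  let: (A, B, C) := f in [&& disc f == D, 0 <= 2 * B, 2 * B <= A & A <= C].

Lemma rfbP D f : reflect (reduced_form_set D f) (rfb D f).
Proof.
case: f => [[A B] C] /=; apply: (iffP idP).
- by case/and4P => /eqP.
- by case=> -> h1 h2 h3; rewrite eqxx h1 h2 h3.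
Qed.

Definition enumF (M : nat) : seq bform :=
  [seq ((t.1.1 : nat)%:Z, (t.1.2 : nat)%:Z, (t.2 : nat)%:Z) |
     t : 'I_M.+1 * 'I_M.+1 * 'I_M.+1 <- enum {: 'I_M.+1 * 'I_M.+1 * 'I_M.+1}].

Lemma enumF_uniq M : uniq (enumF M).
Proof.
rewrite map_inj_uniq ?enum_uniq //.
move=> [[a b] c] [[a' b'] c'] /= [e1 e2 e3].
by congr (_, _, _); apply: val_inj.
Qed.

Lemma nat_of_int (A : int) : 0 <= A -> exists a : nat, A = a%:Z.
Proof. by case: A => [a|a] // _; exists a. Qed.

Lemma enumF_mem M (A B C : int) : 0 <= A <= M%:Z -> 0 <= B <= M%:Z -> 0 <= C <= M%:Z ->
  (A, B, C) \in enumF M.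
Proof.
move=> /andP[hA hA'] /andP[hB hB'] /andP[hC hC'].
have [a ea] := nat_of_int _ hA; have [b eb] := nat_of_int _ hB; have [c ec] := nat_of_int _ hC.
subst A B C.
apply/mapP; exists (inord a, inord b, inord c); first by rewrite mem_enum.
rewrite /= !inordK //; lia.
Qed.

Lemma bound (D A B C : int) : D < 0 -> reduced_form_set D (A, B, C) ->
  [/\ 0 <= A <= - D, 0 <= B <= - D & 0 <= C <= - D].
Proof.
move=> hD [e h1 h2 h3]; move: e; rewrite /disc => e.
have hA : 0 <= A by lia.
have hA1 : 1 <= A.
  case: (ltrP 0 A) => h; first lia.
  have A0 : A = 0 by lia.
  have B0 : B = 0 by lia.
  subst; lia.
have q1 : 4 * B ^+ 2 <= A ^+ 2 by nia.
have q2 : A * A <= A * C by nia.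
have q3 : C <= A * C by nia.
have q4 : - D >= 3 * (A * C) by nia.
split; lia.
Qed.

Lemma quadof_inj n : injective (quadof n).
Proof.
move=> [[A B] C] [[A' B'] C'] /= [e1 e2 e3].
have eA : A = A' by lia.
have eC : C = C' by lia.
subst; congr (_, _, _); lia.
Qed.

Theorem theorem4p1 (m n : int) (hn : 0 < n) :
  let D := - 4 * n ^+ 2 + 4 * m in
  ((forall v, root_set (4 * m) n v ->
      exists! f, reduced_form_set D f /\ corr n v f) /\
   (forall f, reduced_form_set D f ->
      exists! v, root_set (4 * m) n v /\ corr n v f)) /\
  (D < 0 -> exists N : nat, Nroot_is (4 * m) n N /\ htilde_is (- 4 * (n ^+ 2 - m)) N).
Proof.
move=> D.
have fwd : forall v, root_set (4 * m) n v ->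
      exists! f, reduced_form_set D f /\ corr n v f.
  move=> [[[w x] y] z] hv.
  have [B [hB hc]] := root_form m n _ hv.
  exists (x - n, B, y - n); split => // -[[A' B'] C'] [_ hc'].
  move: hc hc'; rewrite /corr => -[e1 e2 e3] [e1' e2' e3'].
  congr (_, _, _); lia.
have bwd : forall f, reduced_form_set D f ->
      exists! v, root_set (4 * m) n v /\ corr n v f.
  move=> f hf; exists (quadof n f); split.
    split; first exact: quadof_root.
    by case: f {hf} => [[A B] C]; rewrite /corr /=; split; lia.
  move=> [[[w x] y] z] [hv hc].
  case: hv => _ _ _ hw.
  case: f {hf} hc => [[A B] C]; rewrite /corr /= => -[e1 e2 e3].
  congr (_, _, _, _); lia.
split; first by split.
move=> hD.
pose M := `|D|%N.
have hM : (M%:Z) = - D by rewrite /M; lia.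
pose sF := filter (rfb D) (enumF M).
have memF : forall f, f \in sF <-> reduced_form_set D f.
  move=> f; rewrite mem_filter; split.
    by case/andP => /rfbP.
  move=> hf; apply/andP; split; first exact/rfbP.
  case: f hf => [[A B] C] hf.
  have [h1 h2 h3] := bound _ _ _ _ hD hf.
  apply: enumF_mem; lia.
have uF : uniq sF by rewrite filter_uniq // enumF_uniq.
exists (size sF); split; last first.
  have -> : - 4 * (n ^+ 2 - m) = D by rewrite /D; ring.
  by exists sF.
exists (map (quadof n) sF); split.
- by rewrite map_inj_uniq //; apply: quadof_inj.
- move=> v; split.
    case/mapP => f /memF hf ->; exact: quadof_root.
  move=> hv; have := hv.
  case: v hv => [[[w x] y] z] hv _.
  have [B [hB hc]] := root_form m n _ hv.
  have hw : w = - n by case: hv.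
  have -> : (w, x, y, z) = quadof n (x - n, B, y - n).
    move: hc; rewrite /corr /= => -[e1 e2 e3]; congr (_, _, _, _); lia.
  by apply: map_f; apply/memF.
- by rewrite size_map.
Qed.
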